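(* For all real $y$, $$\sum_{k=0}^{4}g_{5k}^2(y)=\frac15e^{2y}+\frac25e^{(\sqrt5-1)y/2}+\frac25e^{-(\sqrt5+1)y/2}.$$
   Context: The polar 5-dimensional cosexponential functions are $g_{5k}(y)=\sum_{p=0}^\infty \frac{y^{k+5p}}{(k+5p)!}$ for $k=0,\dots,4$ and real $y$. *)

(* Defs.v *)
From Stdlib Require Import Reals.
From Coquelicot Require Import Coquelicot.
Open Scope R_scope.

Definition g5 (k : nat) (y : R) : R :=
  Series (fun p : nat => y ^ (k + 5 * p) / INR (Factorial.fact (k + 5 * p))).

(* Main.v *)
Require Import Defs.
From Stdlib Require Import Reals Lia Lra.
From Coquelicot Require Import Coquelicot.
Open Scope R_scope.

Definition a5 (k n : nat) : R := if Nat.eqb (n mod 5) k then / INR (Factorial.fact n) else 0.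

Lemma a5_bound k x n : Rabs (a5 k n * x ^ n) <= / INR (Factorial.fact n) * Rabs x ^ n.
Proof.
  unfold a5. rewrite Rabs_mult, <- RPow_abs.
  assert (0 < / INR (Factorial.fact n)) by (apply Rinv_0_lt_compat, lt_0_INR, Factorial.lt_O_fact).
  assert (0 <= Rabs x ^ n) by (apply pow_le, Rabs_pos).
  destruct (Nat.eqb _ _).
  - rewrite Rabs_right by lra. lra.
  - rewrite Rabs_R0. nra.
Qed.

Lemma a5_disk k x : CV_disk (a5 k) x.
Proof.
  unfold CV_disk.
  apply (@ex_series_le R_AbsRing R_CompleteNormedModule _ (fun n => / INR (Factorial.fact n) * Rabs x ^ n)).
  - intros n. unfold norm; simpl. unfold abs; simpl. idtac.
    rewrite Rabs_Rabsolu. apply a5_bound.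
  - pose proof (is_exp_Reals (Rabs x)) as H.
    exists (exp (Rabs x)). eapply is_series_ext; [|exact H].
    intros n. simpl. unfold scal; simpl. unfold mult; simpl. rewrite pow_n_pow. ring.
Qed.

Lemma a5_rad k x : Rbar_lt (Rabs x) (CV_radius (a5 k)).
Proof.
  apply Rbar_lt_le_trans with (Rabs x + 1). simpl; lra.
  apply (proj1 (Lub_Rbar_correct _)). apply a5_disk.
Qed.

Definition pk (k : nat) : nat := match k with O => 4%nat | S j => j end.

Lemma bool_shift r k : (r < 5)%nat -> (k < 5)%nat -> ((r+1) mod 5 =? k) = (r =? pk k).
Proof.
  intros Hr Hk.
  destruct k as [|[|[|[|[|]]]]]; try lia; destruct r as [|[|[|[|[|]]]]]; try lia; reflexivity.
Qed.

Lemma PSd k n : (k < 5)%nat -> PS_derive (a5 k) n = a5 (pk k) n.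
Proof.
  intros Hk. unfold PS_derive, a5.
  assert (Smod : (S n mod 5 = (n mod 5 + 1) mod 5)%nat).
  { replace (S n) with (n + 1)%nat by lia. rewrite Nat.Div0.add_mod. reflexivity. }
  rewrite Smod, bool_shift; [| apply Nat.mod_upper_bound; lia | exact Hk].
  destruct (_ =? _).
  - change (Factorial.fact (S n)) with (S n * Factorial.fact n)%nat.
    rewrite mult_INR. field. split; apply not_0_INR; [apply Nat.neq_sym, Nat.lt_neq, Factorial.lt_O_fact | lia].
  - ring.
Qed.

Definition A k y := PSeries (a5 k) y.

Lemma A_deriv k y : (k < 5)%nat -> is_derive (A k) y (A (pk k) y).
Proof.
  intros Hk. unfold A.
  apply (is_derive_ext (PSeries (a5 k))). reflexivity.
  replace (PSeries (a5 (pk k)) y) with (PSeries (PS_derive (a5 k)) y).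
  apply is_derive_PSeries, a5_rad.
  apply PSeries_ext. intros n. apply PSd, Hk.
Qed.

Lemma sum5 (f : nat -> R) N : sum_f_R0 f (N+5) = sum_f_R0 f N + f (N+1)%nat + f (N+2)%nat + f(N+3)%nat + f(N+4)%nat + f(N+5)%nat.
Proof. rewrite !Nat.add_succ_r, !Nat.add_0_r. simpl. ring. Qed.

Lemma a5_off k m j : (k < 5)%nat -> (0 < j < 5)%nat -> a5 k (k+5*m+j) = 0.
Proof.
  intros Hk Hj. unfold a5.
  replace (k+5*m+j)%nat with ((k+j) + m*5)%nat by lia. rewrite Nat.Div0.mod_add.
  destruct k as [|[|[|[|[|]]]]]; try lia; destruct j as [|[|[|[|[|]]]]]; try lia; reflexivity.
Qed.

Lemma a5_on k m : (k < 5)%nat -> a5 k (k+5*m) = / INR (Factorial.fact (k+5*m)).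
Proof.
  intros Hk. unfold a5.
  replace (k+5*m)%nat with (k + m*5)%nat at 1 by lia. rewrite Nat.Div0.mod_add.
  rewrite Nat.mod_small by lia. rewrite Nat.eqb_refl. reflexivity.
Qed.

Lemma psums k y m : (k < 5)%nat ->
  sum_f_R0 (fun n => y ^ n * a5 k n) (k + 5*m) =
  sum_f_R0 (fun p => y ^ (k + 5 * p) / INR (Factorial.fact (k + 5 * p))) m.
Proof.
  intros Hk. induction m as [|m IH].
  - rewrite Nat.mul_0_r, Nat.add_0_r. simpl sum_f_R0 at 2.
    destruct k as [|[|[|[|[|]]]]]; try lia; simpl; unfold a5; simpl; field.
  - rewrite tech5, <- IH.
    replace (k + 5 * S m)%nat with (k + 5 * m + 5)%nat by lia.
    rewrite sum5, !a5_off by lia.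
    replace (k + 5 * m + 5)%nat with (k + 5 * S m)%nat by lia.
    rewrite a5_on by lia. unfold Rdiv. ring.
Qed.

Lemma g_eq k y : (k < 5)%nat -> g5 k y = A k y.
Proof.
  intros Hk. unfold g5, A. apply is_series_unique.
  assert (H : is_pseries (a5 k) y (PSeries (a5 k) y)).
  { apply PSeries_correct, CV_disk_correct, a5_disk. }
  unfold is_pseries, is_series in *.
  eapply filterlim_ext; [| eapply filterlim_comp;
     [apply (eventually_subseq (fun m => k + 5 * m)%nat) | exact H]].
  - intros m. simpl. rewrite !sum_n_Reals. rewrite <- psums by exact Hk.
    apply sum_eq. intros i _. unfold scal; simpl; unfold mult; simpl. rewrite pow_n_pow. ring.
  - intros n. lia.
Qed.

Lemma ode (f : R -> R) c : (forall y, is_derive f y (c * f y)) -> forall y, f y = f 0 * exp (c*y).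
Proof.
  intros Hd y.
  set (h := fun t => f t * exp (- c * t)).
  assert (Hh : forall t, is_derive h t 0).
  { intros t. unfold h.
    assert (He : is_derive (fun t => exp (- c * t)) t (- c * exp (- c * t))).
    { auto_derive. auto. ring. }
    pose proof (is_derive_mult _ _ t _ _ (Hd t) He) as HH.
    simpl in HH. unfold mult, plus in HH; simpl in HH.
    replace 0 with (c * f t * exp (- c * t) + f t * (- c * exp (- c * t))) by ring.
    apply HH. intros; ring. }
  destruct (MVT_cor4 h (fun _ => 0) 0 (Rabs (y - 0))) with (b := y) as [x [Hx _]].
  { intros; apply Hh. } { lra. }
  unfold h in Hx.
  replace (f y) with (f y * exp (- c * y) * exp (c * y)).
  2:{ rewrite Rmult_assoc, <- exp_plus. replace (- c * y + c * y) with 0 by ring. rewrite exp_0. ring. }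
  replace (f y * exp (- c * y)) with (f 0 * exp (- c * 0)) by lra.
  replace (- c * 0) with 0 by ring. rewrite exp_0. ring.
Qed.

Definition E (c1 c2 : R) (y : R) : R :=
  (A 0 y ^ 2 + A 1 y ^ 2 + A 2 y ^ 2 + A 3 y ^ 2 + A 4 y ^ 2)
  + c1 * (A 0 y * A 1 y + A 1 y * A 2 y + A 2 y * A 3 y + A 3 y * A 4 y + A 4 y * A 0 y)
  + c2 * (A 0 y * A 2 y + A 1 y * A 3 y + A 2 y * A 4 y + A 3 y * A 0 y + A 4 y * A 1 y).

Lemma E_deriv l c1 c2 : c1 = l -> 2 + c2 = l * c1 -> c1 + c2 = l * c2 ->
  forall y, is_derive (E c1 c2) y (l * E c1 c2 y).
Proof.
  intros H1 H2 H3 y.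
  pose proof (A_deriv 0 y ltac:(lia)) as D0.
  pose proof (A_deriv 1 y ltac:(lia)) as D1.
  pose proof (A_deriv 2 y ltac:(lia)) as D2.
  pose proof (A_deriv 3 y ltac:(lia)) as D3.
  pose proof (A_deriv 4 y ltac:(lia)) as D4.
  simpl in D0, D1, D2, D3, D4.
  unfold E. auto_derive.
  - repeat split; eexists; eassumption.
  - replace (Derive (fun x => A 0 x) y) with (A 4 y) by (symmetry; apply is_derive_unique; exact D0).
    replace (Derive (fun x => A 1 x) y) with (A 0 y) by (symmetry; apply is_derive_unique; exact D1).
    replace (Derive (fun x => A 2 x) y) with (A 1 y) by (symmetry; apply is_derive_unique; exact D2).
    replace (Derive (fun x => A 3 x) y) with (A 2 y) by (symmetry; apply is_derive_unique; exact D3).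
    replace (Derive (fun x => A 4 x) y) with (A 3 y) by (symmetry; apply is_derive_unique; exact D4).
    rewrite <- H1 in H2, H3. 
    transitivity (c1 * (A 0 y ^ 2 + A 1 y ^ 2 + A 2 y ^ 2 + A 3 y ^ 2 + A 4 y ^ 2)
      + (2 + c2) * (A 0 y * A 1 y + A 1 y * A 2 y + A 2 y * A 3 y + A 3 y * A 4 y + A 4 y * A 0 y)
      + (c1 + c2) * (A 0 y * A 2 y + A 1 y * A 3 y + A 2 y * A 4 y + A 3 y * A 0 y + A 4 y * A 1 y)).
    + ring.
    + rewrite H2, H3. subst l. ring.
Qed.

Lemma E0 c1 c2 : E c1 c2 0 = 1.
Proof.
  unfold E, A. rewrite !PSeries_0. unfold a5. simpl. rewrite Rinv_1. ring.
Qed.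

Lemma E_exp l c1 c2 : c1 = l -> 2 + c2 = l * c1 -> c1 + c2 = l * c2 ->
  forall y, E c1 c2 y = exp (l * y).
Proof.
  intros H1 H2 H3 y. rewrite (ode (E c1 c2) l (E_deriv l c1 c2 H1 H2 H3) y), E0. ring.
Qed.

Theorem mainTheorem4 : forall y : R,
  sum_f_R0 (fun k => (g5 k y) ^ 2) 4 =
    / 5 * exp (2 * y)
    + 2 / 5 * exp ((sqrt 5 - 1) * y / 2)
    + 2 / 5 * exp (- ((sqrt 5 + 1) * y / 2)).
Proof.
  intros y. simpl sum_f_R0.
  rewrite !g_eq by lia.
  set (s := sqrt 5).
  assert (Hs : s * s = 5) by (apply sqrt_sqrt; lra).
  set (a := (s - 1) / 2).
  set (b := - ((s + 1) / 2)).
  replace ((s - 1) * y / 2) with (a * y) by (unfold a; field).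
  replace (- ((s + 1) * y / 2)) with (b * y) by (unfold b; field).
  rewrite <- (E_exp 2 2 2) by ring.
  rewrite <- (E_exp a a (-(a+1))) by (try reflexivity; unfold a; nra).
  rewrite <- (E_exp b b (-(b+1))) by (try reflexivity; unfold b; nra).
  unfold E. replace b with (-1 - a) by (unfold a, b; field). field.
Qed.
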